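(* Let $M$ be a finite set with $|M|=m$ and let $\mu$ be a probability distribution on the power set $\mathcal{P}(M)$. For $k\in\mathbb{N}$ let $S_1,\dots,S_k$ be independent random subsets of $M$, each with $\Pr[S_i=X]=\mu(\{X\})$ for $X\subseteq M$, and let $F^k_\ell$ denote the event $|\bigcap_{i=1}^k S_i|\ge\ell$. For $X\subseteq M$ let $X^\uparrow=\{Y\subseteq M: X\subseteq Y\}$, let $\mathcal{M}_\ell=\{X\subseteq M:|X|=\ell\}$, and let $A_\ell$ be the multiset $\{\mu(X^\uparrow): X\in\mathcal{M}_\ell\}$ for $\ell\in\{0,1,\dots,m\}$. Then the values $\Pr[F^k_\ell]$ for $\ell\in\{0,\dots,m\}$ and $k\in\{1,\dots,\binom{m}{\ell}\}$ continuously determine the multisets $A_\ell$ for all $\ell\in\{0,\dots,m\}$. That is, for every probability distribution $\mu$ on $\mathcal{P}(M)$ and every $\varepsilon>0$ there is $\delta>0$ such that for every probability distribution $\mu'$ on $\mathcal{P}(M)$ satisfying $|\Pr_{\mu}[F^k_\ell]-\Pr_{\mu'}[F^k_\ell]|\le\delta$ for all $\ell\in\{0,\dots,m\}$ and $k\in\{1,\dots,\binom{m}{\ell}\}$, there exist, for each $\ell$, a bijection $\pi_\ell:\mathcal{M}_\ell\to\mathcal{M}_\ell$ with $|\mu(X^\uparrow)-\mu'(\pi_\ell(X)^\uparrow)|\le\varepsilon$ for all $X\in\mathcal{M}_\ell$ (where $\Pr_{\mu}$, $\Pr_{\mu'}$ denote the probabilities computed with $S_i$ distributed according to $\mu$,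 resp. $\mu'$). In particular, if $\Pr_\mu[F^k_\ell]=\Pr_{\mu'}[F^k_\ell]$ for all such $\ell,k$, then the multisets $A_\ell$ computed from $\mu$ and from $\mu'$ coincide for every $\ell$. *)

(* Defs.v *)
From HB Require Import structures.
From mathcomp Require Import all_boot all_order all_algebra.
From mathcomp Require Import reals.
Set Implicit Arguments. Unset Strict Implicit. Unset Printing Implicit Defensive.
Import Order.TTheory GRing.Theory Num.Theory.
Local Open Scope ring_scope.

Definition is_distr (R : realType) (M : finType) (mu : {set M} -> R) : Prop :=
  (forall X, 0 <= mu X) /\ \sum_(X : {set M}) mu X = 1.

Definition mu_up (R : realType) (M : finType) (mu : {set M} -> R) (X : {set M}) : R :=
  \sum_(Y : {set M} | X \subset Y) mu Y.

(* Pr[F^k_l] = Pr[ |S_1 cap ... cap S_k| >= l ] where S_1..S_k are independent,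
   each distributed according to mu: the product distribution on k-tuples. *)
Definition PrF (R : realType) (M : finType) (mu : {set M} -> R) (k l : nat) : R :=
  \sum_(S : {ffun 'I_k -> {set M}})
     (\prod_(i < k) mu (S i)) *
     (if (l <= #|\bigcap_(i < k) S i|)%N then 1 else 0).

(* Main.v *)
Require Import Defs.
From HB Require Import structures.
From mathcomp Require Import all_boot all_order all_algebra.
From mathcomp Require Import reals.
From mathcomp Require Import ring lra zify.
Import Order.TTheory GRing.Theory Num.Theory.
Local Open Scope ring_scope.

Lemma interp {R : realFieldType} (g : nat -> R) m : exists d : nat -> R,
  forall N, (N <= m)%N -> g N = \sum_(j < N.+1) d j * 'C(N, j)%:R.
Proof.
elim: m => [|m [d Hd]].
  exists (fun _ => g 0%N) => N; rewrite leqn0 => /eqP ->.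
  by rewrite big_ord_recl big_ord0 bin0 mulr1 addr0.
pose d' j := if j == m.+1 then g m.+1 - \sum_(i < m.+1) d i * 'C(m.+1, i)%:R else d j.
exists d' => N; rewrite leq_eqVlt => /orP[/eqP -> | ].
  rewrite big_ord_recr /= /d' eqxx binn mulr1.
  have -> : \sum_(i < m.+1) (if (i : nat) == m.+1 then g m.+1 - \sum_(i0 < m.+1) d i0 * 'C(m.+1, i0)%:R else d i) * 'C(m.+1, i)%:R
     = \sum_(i < m.+1) d i * 'C(m.+1, i)%:R.
    by apply: eq_bigr => i _; rewrite ltn_eqF.
  by rewrite addrC subrK.
rewrite ltnS => Nm; rewrite Hd //; apply: eq_bigr => i _.
by rewrite /d' ltn_eqF // (leq_trans (ltn_ord i)) // ltnS.
Qed.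

Lemma comb_ind {R : realFieldType} m l : (0 < l)%N -> (l <= m)%N -> exists e : nat -> R,
  (forall j, (j <= l)%N -> e j = 0) /\
  forall N, (N <= m)%N -> (if (l <= N)%N then 1 else 0) = 'C(N, l)%:R + \sum_(j < m.+1) e j * 'C(N, j)%:R.
Proof.
move=> l0 lm.
have [d Hd] := interp (fun N => if (l <= N)%N then (1 : R) else 0) m.
have ext N : (N <= m)%N -> (if (l <= N)%N then (1 : R) else 0) = \sum_(j < m.+1) d j * 'C(N, j)%:R.
  move=> Nm; rewrite Hd //.
  rewrite (big_ord_widen m.+1 (fun j => d j * 'C(N, j)%:R)) ?ltnS // big_mkcond /=.
  apply: eq_bigr => i _; case: ifP => // /negbT; rewrite -leqNgt => h.
  by rewrite bin_small ?mulr0.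
have d0 : forall j, (j < l)%N -> d j = 0.
  elim/ltn_ind => j IHj jl.
  have := ext j (leq_trans (ltnW jl) lm).
  rewrite leqNgt jl /=.
  rewrite (bigD1 (Ordinal (ltnW (leq_trans jl lm) : (j < m.+1)%N))) //= binn mulr1.
  rewrite big1 ?addr0 => [<- //|i /eqP ni].
  case: (ltngtP i j) => h.
  - by rewrite IHj ?mul0r // (ltn_trans h).
  - by rewrite bin_small ?mulr0.
  - by case: ni; apply: val_inj.
have dl : d l = 1.
  have := ext l lm; rewrite leqnn.
  rewrite (bigD1 (Ordinal (lm : (l < m.+1)%N))) //= binn mulr1.
  rewrite big1 ?addr0 => [-> //|i /eqP ni].
  case: (ltngtP i l) => h.
  - by rewrite d0 ?mul0r.
  - by rewrite bin_small ?mulr0.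
  - by case: ni; apply: val_inj.
exists (fun j => if (l < j)%N then d j else 0); split.
  by move=> j jl; rewrite ltnNge jl.
move=> N Nm; rewrite ext //.
rewrite (bigD1 (Ordinal (lm : (l < m.+1)%N))) //= dl mul1r.
rewrite [X in _ = _ + X](bigD1 (Ordinal (lm : (l < m.+1)%N))) //= ltnn mul0r add0r.
congr (_ + _); apply: eq_bigr => i /eqP ni.
case: (ltngtP l i) => h //.
- by rewrite d0.
- by case: ni; apply: val_inj.
Qed.

Fixpoint ce {R : realFieldType} (s : seq R) (k : nat) : R :=
  match k with
  | 0 => 1
  | k'.+1 => match s with [::] => 0 | x :: s' => ce s' k'.+1 - x * ce s' k' end
  end.
Definition ps {R : realFieldType} (s : seq R) (i : nat) : R := \sum_(x <- s) x ^+ i.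

Lemma ce0 {R : realFieldType} (s : seq R) : ce s 0 = 1.
Proof. by case: s. Qed.

Lemma ce_cons {R : realFieldType} (x : R) s i :
  ce (x :: s) i = ce s i - x * (if i is j.+1 then ce s j else 0).
Proof. case: i => [|i] //=; by rewrite ce0 mulr0 subr0. Qed.

Lemma ce_big {R : realFieldType} (s : seq R) k : (size s < k)%N -> ce s k = 0.
Proof.
elim: s k => [|x s IH] [|k] //= H.
by rewrite !IH ?mulr0 ?subr0 // ltnW.
Qed.

Lemma newton {R : realFieldType} (s : seq R) k :
  k%:R * ce s k + \sum_(i < k) ce s i * ps s (k - i) = 0.
Proof.
elim: s k => [|x s IH] k.
  case: k => [|k]; first by rewrite big_ord0 mul0r addr0.
  rewrite /= mulr0 add0r big1 // => i _; by rewrite /ps big_nil mulr0.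
case: k => [|K]; first by rewrite big_ord0 mul0r addr0.
have psc j : ps (x :: s) j = x ^+ j + ps s j by rewrite /ps big_cons.
have E : \sum_(i < K.+1) ce (x :: s) i * ps (x :: s) (K.+1 - i) =
  \sum_(i < K.+1) ce s i * ps s (K.+1 - i) + \sum_(i < K.+1) ce s i * x ^+ (K.+1 - i)
  - x * \sum_(i < K.+1) (if val i is j.+1 then ce s j else 0) * ps s (K.+1 - i)
  - x * \sum_(i < K.+1) (if val i is j.+1 then ce s j else 0) * x ^+ (K.+1 - i).
  rewrite !mulr_sumr -big_split -!sumrB /=; apply: eq_bigr => i _.
  case: i => [[|j] Hj] /=; rewrite psc ?ce0; ring.
have C : \sum_(i < K.+1) (if val i is j.+1 then ce s j else 0) * ps s (K.+1 - i)
   = \sum_(i < K) ce s i * ps s (K - i).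
  by rewrite big_ord_recl /= mul0r add0r.
have D : \sum_(i < K.+1) ce s i * x ^+ (K.+1 - i) =
   x * \sum_(i < K.+1) (if val i is j.+1 then ce s j else 0) * x ^+ (K.+1 - i)
   + ce s K * x.
  rewrite big_ord_recr /= subSnn expr1 big_ord_recl /= mul0r add0r mulr_sumr.
  congr (_ + _); apply: eq_bigr => i _.
  by rewrite subSS subSn ?exprS; [ring | exact: ltnW].
rewrite E D C /=.
have IH1 := IH K.+1. have IH2 := IH K.
set A := \sum_(i < K.+1) _ in IH1 *.
set B := \sum_(i < K) _ in IH2 *.
have HA : A = - (K.+1%:R * ce s K.+1) by apply/eqP; rewrite -addr_eq0 addrC IH1.
have HB : B = - (K%:R * ce s K) by apply/eqP; rewrite -addr_eq0 addrC IH2.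
rewrite HA HB -addn1 natrD; ring.
Qed.

Lemma prod_ce {R : realFieldType} (s : seq R) y :
  \prod_(x <- s) (y - x) = \sum_(k < (size s).+1) ce s k * y ^+ (size s - k).
Proof.
elim: s => [|x s IH]; first by rewrite big_nil big_ord_recl big_ord0 /= expr0 mulr1 addr0.
rewrite big_cons IH.
change (size (x :: s)) with (size s).+1.
set n := size s.
have H1 : y * \sum_(k < n.+1) ce s k * y ^+ (n - k) =
    y ^+ n.+1 + \sum_(k < n.+1) ce s k.+1 * y ^+ (n - k).
  rewrite mulr_sumr big_ord_recl big_ord_recr /= subn0 ce0 mul1r (@ce_big _ s n.+1) //.
  rewrite mul0r addr0 exprS; congr (_ + _); apply: eq_bigr => i _.
  by rewrite /bump /= add1n mulrCA -exprS subnSK.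
rewrite mulrBl H1 [RHS]big_ord_recl ce0 mul1r subn0 -addrA mulr_sumr -sumrB; congr (_ + _).
apply: eq_bigr => i _; rewrite lift0 subSS ce_cons; ring.
Qed.

Lemma ce_S {R : realFieldType} (s : seq R) k :
  ce s k.+1 = - (\sum_(i < k.+1) ce s i * ps s (k.+1 - i)) / k.+1%:R.
Proof.
have := newton s k.+1; set S := \sum_(i < k.+1) _ => H.
have nz : k.+1%:R != 0 :> R by rewrite pnatr_eq0.
have -> : S = - (k.+1%:R * ce s k.+1) by apply/eqP; rewrite -addr_eq0 addrC H.
by rewrite opprK mulrAC divff ?mul1r.
Qed.

Lemma mul_close {R : realFieldType} (a b a' b' e : R) : 0 <= e <= 1 ->
  `|a - a'| <= e -> `|b - b'| <= e -> `|a * b - a' * b'| <= (`|a| + `|b| + 1) * e.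
Proof.
move=> /andP[e0 e1] ha hb.
have -> : a * b - a' * b' = a * (b - b') + (a - a') * b' by ring.
apply: le_trans (ler_normD _ _) _; rewrite !normrM.
have hb' : `|b'| <= `|b| + 1.
  have : `|b'| <= `|b| + `|b' - b| by rewrite -{1}(subrKC b b') ler_normD.
  by rewrite distrC => H; apply: le_trans H _; rewrite lerD2l (le_trans hb).
have t1 : `|a| * `|b - b'| <= `|a| * e by rewrite ler_wpM2l.
have t2 : `|a - a'| * `|b'| <= e * (`|b| + 1) by apply: ler_pM.
nra.
Qed.

Lemma ce_cont {R : realFieldType} (A : seq R) k : forall eps : R, 0 < eps ->
  exists2 d : R, 0 < d & forall B : seq R,
    (forall j, (0 < j <= k)%N -> `|ps A j - ps B j| <= d) ->
    forall i, (i <= k)%N -> `|ce A i - ce B i| <= eps.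
Proof.
elim: k => [|k IH] eps he.
  exists 1 => // B _ i; rewrite leqn0 => /eqP ->; by rewrite !ce0 subrr normr0 ltW.
pose Kc := \sum_(i < k.+1) (`|ce A i| + `|ps A (k.+1 - i)| + 1).
have Kc0 : 0 < Kc.
  rewrite /Kc big_ord_recl; apply: ltr_wpDr.
    by apply: sumr_ge0 => i _; apply: addr_ge0 => //; apply: addr_ge0.
  by apply: ltr_wpDl => //; apply: addr_ge0.
pose eta := Num.min 1 (Num.min eps (eps / Kc)).
have eta0 : 0 < eta by rewrite /eta !lt_min ltr01 he divr_gt0.
have eta1 : eta <= 1 by rewrite /eta ge_min lexx.
have etae : eta <= eps by rewrite /eta !ge_min lexx orbT.
have etaK : eta <= eps / Kc by rewrite /eta !ge_min lexx !orbT.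
have [d0 d00 Hd0] := IH eta eta0.
exists (Num.min d0 eta); first by rewrite lt_min d00.
move=> B HB i; rewrite leq_eqVlt => /orP[/eqP -> | ]; last first.
  rewrite ltnS => ik; apply: le_trans (Hd0 B _ i ik) etae => j /andP[j0 jk].
  apply: le_trans (HB j _) _; first by rewrite j0 (leq_trans jk).
  by rewrite ge_min lexx.
have hc : forall i, (i <= k)%N -> `|ce A i - ce B i| <= eta.
  move=> i' ik; apply: Hd0 => // j /andP[j0 jk].
  apply: le_trans (HB j _) _; first by rewrite j0 (leq_trans jk).
  by rewrite ge_min lexx.
have hp : forall j, (0 < j <= k.+1)%N -> `|ps A j - ps B j| <= eta.
  by move=> j hj; apply: le_trans (HB j hj) _; rewrite ge_min lexx orbT.
rewrite !ce_S.
set SA := \sum_(i < k.+1) _. set SB := \sum_(i < k.+1) _.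
have hS : `|SA - SB| <= Kc * eta.
  rewrite /SA /SB -sumrB; apply: le_trans (ler_norm_sum _ _ _) _.
  rewrite /Kc mulr_suml; apply: ler_sum => i0 _; apply: mul_close.
  - by rewrite (ltW eta0) eta1.
  - by apply: hc; rewrite -ltnS.
  - by apply: hp; rewrite subn_gt0 ltn_ord leq_subr.
have hKe : Kc * eta <= eps by rewrite mulrC -ler_pdivlMr.
have -> : - SA / k.+1%:R - - SB / k.+1%:R = - ((SA - SB) / k.+1%:R) by ring.
rewrite normrN normf_div normr_nat ler_pdivrMr ?ltr0n //.
apply: le_trans (le_trans hS hKe) _.
by rewrite ler_peMr ?(ltW he) // ?ler1n ?ltr0n.
Qed.

Lemma prod_lb {R : realFieldType} (A : seq R) (y r : R) : 0 <= r ->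
  (forall x, x \in A -> r <= `|y - x|) -> r ^+ size A <= `|\prod_(x <- A) (y - x)|.
Proof.
move=> r0; elim: A => [|x A IH] H; first by rewrite big_nil normr1 expr0.
rewrite big_cons normrM /= exprS; apply: ler_pM => //; first exact: exprn_ge0.
  by apply: H; rewrite mem_head.
by apply: IH => z hz; apply: H; rewrite in_cons hz orbT.
Qed.

Lemma stepS {R : realFieldType} (A : seq R) (rho : R) : 0 < rho ->
  exists2 d : R, 0 < d & forall B : seq R, size B = size A ->
    (forall y, y \in B -> `|y| <= 1) ->
    (forall j, (0 < j <= size A)%N -> `|ps A j - ps B j| <= d) ->
    forall y, y \in B -> has (fun x => `|y - x| <= rho) A.
Proof.
move=> rho0; set n := size A.
pose eta := rho ^+ n / (2 * n.+1%:R).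
have eta0 : 0 < eta by rewrite /eta divr_gt0 ?exprn_gt0 // mulr_gt0 ?ltr0n.
have [d d0 Hd] := ce_cont A n eta eta0.
exists d => // B sB B1 HB y yB; apply/negPn/negP => /hasPn Hn.
have hlb : rho ^+ n <= `|\prod_(x <- A) (y - x)|.
  apply: prod_lb; first exact: ltW.
  by move=> x /Hn; rewrite -ltNge => /ltW.
have PB : \prod_(x <- B) (y - x) = 0.
  apply/eqP; rewrite prodf_seq_eq0; apply/hasP; exists y => //; by rewrite subrr eqxx.
have hc := Hd B HB.
have hub : `|\prod_(x <- A) (y - x)| <= n.+1%:R * eta.
  have -> : \prod_(x <- A) (y - x) = \prod_(x <- A) (y - x) - \prod_(x <- B) (y - x) by rewrite PB subr0.
  rewrite !prod_ce sB -/n -sumrB.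
  apply: le_trans (ler_norm_sum _ _ _) _.
  have -> : n.+1%:R * eta = \sum_(k < n.+1) eta by rewrite sumr_const card_ord mulr_natl.
  apply: ler_sum => k _; rewrite -mulrBl normrM.
  apply: le_trans (_ : _ <= `|ce A k - ce B k|) _; last by apply: hc; rewrite -ltnS.
  apply: ler_piMr => //; rewrite normrX; apply: exprn_ile1 => //; exact: B1.
have : rho ^+ n <= n.+1%:R * eta by apply: le_trans hlb hub.
rewrite /eta.
have h1 : 0 < rho ^+ n by rewrite exprn_gt0.
set t := rho ^+ n.
have -> : n.+1%:R * (t / (2 * n.+1%:R)) = t / 2.
  by field; rewrite addrC natr1 pnatr_eq0.
move=> Ht; have h2 : 0 < t := h1; clearbody t; lra.
Qed.

Lemma seq_min {R : realFieldType} {T : eqType} (P : T -> R -> Prop) (s : seq T) :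
  (forall x d d', 0 < d' -> d' <= d -> P x d -> P x d') ->
  (forall x, x \in s -> exists2 d, 0 < d & P x d) ->
  exists2 d, 0 < d & forall x, x \in s -> P x d.
Proof.
move=> Pmon; elim: s => [|x s IH] H; first by exists 1.
have [d1 d10 H1] := H x (mem_head _ _).
have [d2 d20 H2] : exists2 d, 0 < d & forall y, y \in s -> P y d.
  by apply: IH => y ys; apply: H; rewrite in_cons ys orbT.
exists (Num.min d1 d2); first by rewrite lt_min d10.
move=> y; rewrite in_cons => /orP[/eqP -> | ys].
  by apply: Pmon H1; rewrite ?lt_min ?d10 ?ge_min ?lexx.
by apply: Pmon (H2 y ys); rewrite ?lt_min ?d10 ?ge_min ?lexx ?orbT.
Qed.

Lemma pow_close {R : realFieldType} {u v : R} j : `|u| <= 1 -> `|v| <= 1 ->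
  `|u ^+ j - v ^+ j| <= j%:R * `|u - v|.
Proof.
move=> hu hv; rewrite subrXX normrM mulrC; apply: ler_wpM2r => //.
apply: le_trans (ler_norm_sum _ _ _) _.
have -> : j%:R = \sum_(i < j) (1 : R) by rewrite sumr_const card_ord.
apply: ler_sum => i _; rewrite normrM !normrX.
by rewrite mulr_ile1 ?exprn_ge0 ?exprn_ile1.
Qed.

Lemma ps_map {R : realFieldType} {T : eqType} (f : T -> R) s j :
  ps (map f s) j = \sum_(x <- s) f x ^+ j.
Proof. by rewrite /ps big_map. Qed.

Lemma match_main {R : realFieldType} {T : eqType} (fa : T -> R) n :
  forall sa : seq T, size sa = n -> uniq sa -> (forall x, x \in sa -> `|fa x| <= 1) ->
  forall eps : R, 0 < eps -> exists2 d : R, 0 < d &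
    forall (sb : seq T) (fb : T -> R), size sb = n -> uniq sb ->
      (forall y, y \in sb -> `|fb y| <= 1) ->
      (forall j, (0 < j <= n)%N -> `|ps (map fa sa) j - ps (map fb sb) j| <= d) ->
      exists sig : T -> T, [/\ forall x, x \in sa -> sig x \in sb,
          {in sa &, injective sig} & forall x, x \in sa -> `|fa x - fb (sig x)| <= eps].
Proof.
elim: n => [|n IH] sa Hs usa ha eps he.
  exists 1 => // sb fb _ _ _ _; exists id.
  by move/size0nil: Hs => ->; split => // x; rewrite in_nil.
pose P (x : T) (d : R) := forall (sb : seq T) (fb : T -> R), size sb = n -> uniq sb ->
      (forall y, y \in sb -> `|fb y| <= 1) ->
      (forall j, (0 < j <= n)%N -> `|ps (map fa (rem x sa)) j - ps (map fb sb) j| <= d) ->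
      exists sig : T -> T, [/\ forall z, z \in rem x sa -> sig z \in sb,
          {in rem x sa &, injective sig} & forall z, z \in rem x sa -> `|fa z - fb (sig z)| <= eps].
have [d1 d10 H1] : exists2 d, 0 < d & forall x, x \in sa -> P x d.
  apply: seq_min.
    move=> x d d' _ dd' Hx sb fb h1 h2 h3 h4; apply: Hx => // j hj.
    exact: le_trans (h4 j hj) dd'.
  move=> x xs; rewrite /P; apply: (IH (rem x sa)) => //.
  - by rewrite size_rem // Hs.
  - exact: rem_uniq.
  - by move=> z /mem_rem; apply: ha.
pose rho := Num.min eps (d1 / (2 * n.+1%:R)).
have rho0 : 0 < rho by rewrite lt_min he divr_gt0 // mulr_gt0 ?ltr0n.
have [d2 d20 H2] := @stepS _ (map fa sa) rho rho0.
exists (Num.min d2 (d1 / 2)); first by rewrite lt_min d20 divr_gt0.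
move=> [|y0 sb'] fb //= [sb'n] /andP[y0n usb'] hb hps.
have hx : has (fun x => `|fb y0 - x| <= rho) (map fa sa).
  apply: (H2 (map fb (y0 :: sb'))).
  - by rewrite !size_map Hs /= sb'n.
  - by move=> y /mapP[z zs ->]; apply: hb.
  - move=> j hj; apply: le_trans (hps j _) _; first by rewrite -Hs -(size_map fa).
    by rewrite ge_min lexx.
  - by rewrite /= mem_head.
move: hx.
case/hasP => _ /mapP[x0 x0s ->] hx0.
have [sig [s1 s2 s3]] : exists sig : T -> T, [/\ forall x, x \in rem x0 sa -> sig x \in sb',
          {in rem x0 sa &, injective sig} & forall z, z \in rem x0 sa -> `|fa z - fb (sig z)| <= eps].
  apply: (H1 x0 x0s) => //.
  - by move=> y ys; apply: hb; rewrite in_cons ys orbT.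
  move=> j /andP[j0 jn].
  have pa : ps (map fa sa) j = fa x0 ^+ j + ps (map fa (rem x0 sa)) j.
    by rewrite !ps_map (perm_big _ (perm_to_rem x0s)) big_cons.
  have pb : ps (map fb (y0 :: sb')) j = fb y0 ^+ j + ps (map fb sb') j.
    by rewrite /ps big_cons.
  have e1 : `|ps (map fa sa) j - ps (map fb (y0 :: sb')) j| <= d1 / 2.
    by apply: le_trans (hps j _) _; rewrite ?j0 ?(leq_trans jn) // ge_min lexx orbT.
  have e2 : `|fa x0 ^+ j - fb y0 ^+ j| <= j%:R * rho.
    apply: le_trans (pow_close j (ha _ x0s) (hb _ (mem_head _ _))) _.
    by rewrite ler_wpM2l // distrC.
  have e3 : j%:R * rho <= d1 / 2.
    apply: le_trans (_ : n%:R * rho <= _).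
      by rewrite ler_wpM2r ?ler_nat // ltW.
    apply: le_trans (_ : n%:R * (d1 / (2 * n.+1%:R)) <= _).
      by rewrite ler_wpM2l // ge_min lexx orbT.
    have -> : n%:R * (d1 / (2 * n.+1%:R)) = d1 / 2 * (n%:R / n.+1%:R).
      by field; rewrite addrC natr1 pnatr_eq0.
    apply: ler_piMr; first by rewrite divr_ge0 // ltW.
    by rewrite ler_pdivrMr ?ltr0n // mul1r ler_nat.
  have -> : ps (map fa (rem x0 sa)) j - ps (map fb sb') j =
     (ps (map fa sa) j - ps (map fb (y0 :: sb')) j) - (fa x0 ^+ j - fb y0 ^+ j).
    by rewrite pa pb; ring.
  apply: le_trans (ler_normB _ _) _; lra.
have inrem x : x \in sa -> x != x0 -> x \in rem x0 sa.
  by move=> xs nx; rewrite (mem_rem_uniq _ usa) inE nx xs.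
exists (fun x => if x == x0 then y0 else sig x); split.
- move=> x xs; case: eqP => [_|/eqP nx]; first exact: mem_head.
  by rewrite in_cons s1 ?orbT // inrem.
- move=> x y xs ys /=; case: eqP => [->|/eqP nx]; case: eqP => [->|/eqP ny] //.
  + move=> e; have := s1 y (inrem _ ys ny); rewrite -e => h.
    by move: y0n; rewrite h.
  + move=> e; have := s1 x (inrem _ xs nx); rewrite e => h.
    by move: y0n; rewrite h.
  + by apply: s2; apply: inrem.
- move=> x xs; case: eqP => [->|/eqP nx]; last by apply: s3; apply: inrem.
  rewrite distrC; apply: le_trans hx0 _; by rewrite ge_min lexx.
Qed.

Definition Dl (M : finType) (l : nat) := enum [set X : {set M} | #|X| == l].

Lemma mu_up_pow (R : realType) (M : finType) (mu : {set M} -> R) (X : {set M}) k :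
  mu_up mu X ^+ k = \sum_(S : {ffun 'I_k -> {set M}})
     (\prod_(i < k) mu (S i)) * (if X \subset \bigcap_(i < k) S i then 1 else 0).
Proof.
rewrite /mu_up big_mkcond /=.
rewrite -[k in LHS]card_ord -prodr_const bigA_distr_bigA /=.
apply: eq_bigr => S _.
case: (boolP (X \subset \bigcap_(i < k) S i)) => h.
  rewrite mulr1; apply: eq_bigr => i _.
  by rewrite (subset_trans h) // (bigcap_inf i).
rewrite mulr0.
have [i hi] : exists i, ~~ (X \subset S i).
  apply/existsP; apply: contraR h => /existsPn H.
  by apply/bigcapsP => i _; move: (H i); rewrite negbK.
by rewrite (bigD1 i) //= (negbTE hi) mul0r.
Qed.

Lemma qv_expand (R : realType) (M : finType) (mu : {set M} -> R) l k :
  \sum_(X <- Dl M l) mu_up mu X ^+ k = \sum_(S : {ffun 'I_k -> {set M}})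
     (\prod_(i < k) mu (S i)) * 'C(#|\bigcap_(i < k) S i|, l)%:R.
Proof.
rewrite /Dl big_enum /=.
under eq_bigr do rewrite mu_up_pow.
rewrite exchange_big /=; apply: eq_bigr => S _.
rewrite -mulr_sumr; congr (_ * _).
rewrite -cards_draws -sum1_card natr_sum.
rewrite big_mkcond /= [RHS]big_mkcond /=; apply: eq_bigr => X _.
by rewrite !inE andbC; case: (_ == l); case: (X \subset _).
Qed.

Definition qv {R : realType} {M : finType} (mu : {set M} -> R) j k :=
  \sum_(X <- Dl M j) mu_up mu X ^+ k.

Lemma PrF_q (R : realType) (M : finType) l : (0 < l)%N -> (l <= #|M|)%N ->
  exists e : nat -> R, (forall j, (j <= l)%N -> e j = 0) /\
  forall (mu : {set M} -> R) k,
    PrF mu k l = qv mu l k + \sum_(j < #|M|.+1) e j * qv mu j k.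
Proof.
move=> l0 lm; have [e [e0 He]] := @comb_ind R _ _ l0 lm.
exists e; split => // mu k.
rewrite /PrF /qv qv_expand.
under eq_bigr do rewrite He ?max_card //.
under eq_bigr do rewrite mulrDr.
rewrite big_split /=; congr (_ + _).
under eq_bigr do rewrite mulr_sumr.
rewrite exchange_big /=; apply: eq_bigr => j _.
rewrite qv_expand mulr_sumr; apply: eq_bigr => S _; ring.
Qed.

Lemma mu_up_ge0 {R : realType} {M : finType} (mu : {set M} -> R) X :
  is_distr mu -> 0 <= mu_up mu X.
Proof. by case=> h _; apply: sumr_ge0 => Y _; apply: h. Qed.

Lemma mu_up_le1 {R : realType} {M : finType} (mu : {set M} -> R) X :
  is_distr mu -> `|mu_up mu X| <= 1.
Proof.
move=> hm; rewrite ger0_norm ?mu_up_ge0 //; case: hm => h <-.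
rewrite /mu_up big_mkcond /=; apply: ler_sum => Y _.
by case: ifP => // _; apply: h.
Qed.

Lemma mem_Dl (M : finType) j (X : {set M}) : (X \in Dl M j) = (#|X| == j).
Proof. by rewrite /Dl mem_enum inE. Qed.

Lemma size_Dl (M : finType) j : size (Dl M j) = 'C(#|M|, j).
Proof. by rewrite /Dl -cardE card_draws. Qed.

Lemma qdiff (R : realType) (M : finType) (mu mu' : {set M} -> R) j k
  (pi : {set M} -> {set M}) (eps : R) :
  is_distr mu -> is_distr mu' ->
  (forall X : {set M}, #|X| = j -> #|pi X| = j) ->
  {in [pred X : {set M} | #|X| == j] &, injective pi} ->
  (forall X : {set M}, #|X| = j -> `|mu_up mu X - mu_up mu' (pi X)| <= eps) ->
  `|qv mu j k - qv mu' j k| <= ('C(#|M|, j) * k)%:R * eps.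
Proof.
move=> hm hm' h1 h2 h3.
have inj : {in Dl M j &, injective pi}.
  by move=> X Y; rewrite !mem_Dl => hX hY; apply: h2.
have sub : {subset map pi (Dl M j) <= Dl M j}.
  by move=> Y /mapP[X]; rewrite !mem_Dl => /eqP /h1 hX ->; rewrite hX.
have u1 : uniq (map pi (Dl M j)) by rewrite (map_inj_in_uniq inj) enum_uniq.
have [_ eqm] := uniq_min_size u1 sub (eq_leq (esym (size_map pi (Dl M j)))).
have pe : perm_eq (map pi (Dl M j)) (Dl M j) by apply: uniq_perm => //; exact: enum_uniq.
have pe' : perm_eq (Dl M j) (map pi (Dl M j)) by rewrite perm_sym.
rewrite /qv [X in _ - X](perm_big _ pe') big_map -sumrB.
apply: le_trans (ler_norm_sum _ _ _) _.
have -> : ('C(#|M|, j) * k)%:R * eps = \sum_(X <- Dl M j) (k%:R * eps).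
  rewrite big_const_seq count_predT size_Dl natrM -mulrA mulr_natl; elim: ('C(_, _)) => [|n IHn] /=; [by rewrite mulr0n | by rewrite mulrS -IHn].
rewrite big_seq_cond [X in _ <= X]big_seq_cond; apply: ler_sum => X /andP[hX _].
apply: le_trans (pow_close k (mu_up_le1 mu X hm) (mu_up_le1 mu' (pi X) hm')) _.
apply: ler_wpM2l => //.
by apply: h3; apply/eqP; rewrite -mem_Dl.
Qed.

Definition goodpi {R : realType} {M : finType} (mu mu' : {set M} -> R) l (eps : R)
  (pi : {set M} -> {set M}) :=
  [/\ forall X : {set M}, #|X| = l -> #|pi X| = l,
      {in [pred X : {set M} | #|X| == l] &, injective pi} &
      forall X : {set M}, #|X| = l -> `|mu_up mu X - mu_up mu' (pi X)| <= eps].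

Definition Hclose {R : realType} {M : finType} (mu mu' : {set M} -> R) (d : R) :=
  forall l k : nat, (l <= #|M|)%N -> (1 <= k <= 'C(#|M|, l))%N ->
         `|PrF mu k l - PrF mu' k l| <= d.

Lemma levels (R : realType) (M : finType) (mu : {set M} -> R) (hm : is_distr mu) t :
  forall eps : R, 0 < eps -> exists2 d : R, 0 < d & forall mu', is_distr mu' ->
    Hclose mu mu' d -> forall l, (0 < l)%N -> (l <= #|M|)%N -> (#|M| < l + t)%N ->
    exists pi, goodpi mu mu' l eps pi.
Proof.
elim: t => [|t IH] eps he.
  by exists 1 => // mu' _ _ l _ lm; rewrite addn0 ltnNge lm.
set m := #|M|.
case: (leqP m t) => mt.
  have [d d0 Hd] := IH eps he; exists d => // mu' hm' Hc l l0 lm _.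
  by apply: Hd => //; lia.
set L := (m - t)%N.
have L0 : (0 < L)%N by rewrite subn_gt0.
have Lm : (L <= m)%N by rewrite leq_subr.
have [dM dM0 HM] := @match_main _ _ (mu_up mu) _ (Dl M L) (size_Dl M L) (enum_uniq _)
   (fun X _ => mu_up_le1 mu X hm) eps he.
have [e [e0 He]] := @PrF_q R M L L0 Lm.
pose Kc := \sum_(i < m.+1) `|e i| * ('C(m, i) * 'C(m, L))%:R + 1.
have Kc0 : 0 < Kc.
  rewrite /Kc; apply: ltr_wpDl => //; apply: sumr_ge0 => i _.
  by apply: mulr_ge0.
pose eps' := Num.min eps (dM / (2 * Kc)).
have eps'0 : 0 < eps' by rewrite lt_min he divr_gt0 // mulr_gt0.
have eps'e : eps' <= eps by rewrite ge_min lexx.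
have eps'K : Kc * eps' <= dM / 2.
  apply: le_trans (_ : Kc * (dM / (2 * Kc)) <= _).
    by rewrite ler_wpM2l ?(ltW Kc0) // ge_min lexx orbT.
  rewrite le_eqVlt; apply/orP; left; apply/eqP; field.
  by rewrite gt_eqF.
have [dI dI0 HI] := IH eps' eps'0.
exists (Num.min dI (dM / 2)); first by rewrite lt_min dI0 divr_gt0.
move=> mu' hm' Hc.
have HcI : Hclose mu mu' dI.
  by move=> l k h1 h2; apply: le_trans (Hc l k h1 h2) _; rewrite ge_min lexx.
have IHapp := HI mu' hm' HcI.
move=> l l0 lm lt.
case: (ltnP m (l + t)) => h.
  have [pi [p1 p2 p3]] := IHapp l l0 lm h.
  by exists pi; split => // X hX; apply: le_trans (p3 X hX) eps'e.
have lL : l = L.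
  by rewrite /L; lia.
subst l.
have Hq : forall j, (0 < j <= 'C(m, L))%N ->
    `|ps (map (mu_up mu) (Dl M L)) j - ps (map (mu_up mu') (Dl M L)) j| <= dM.
  move=> j /andP[j0 jC]; rewrite !ps_map.
  have E1 := He mu j; have E2 := He mu' j.
  rewrite /qv in E1 E2.
  set S1 := \sum_(i < m.+1) _ in E1; set S2 := \sum_(i < m.+1) _ in E2.
  have -> : \sum_(X <- Dl M L) mu_up mu X ^+ j - \sum_(X <- Dl M L) mu_up mu' X ^+ j
     = (PrF mu j L - PrF mu' j L) - (S1 - S2) by rewrite E1 E2; ring.
  apply: le_trans (ler_normB _ _) _.
  have hP : `|PrF mu j L - PrF mu' j L| <= dM / 2.
    by apply: le_trans (Hc L j Lm _) _; rewrite ?j0 ?jC // ge_min lexx orbT.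
  have hS : `|S1 - S2| <= Kc * eps'.
    rewrite /S1 /S2 -sumrB; apply: le_trans (ler_norm_sum _ _ _) _.
    apply: le_trans (_ : \sum_(i < m.+1) `|e i| * ('C(m, i) * 'C(m, L))%:R * eps' <= _).
      apply: ler_sum => i _; case: (leqP i L) => iL.
        by rewrite e0 // !mul0r subrr normr0 !mul0r.
      rewrite -mulrBr normrM -mulrA; apply: ler_wpM2l => //.
      have im : (i <= m)%N by rewrite -ltnS.
      have [i0 it] : (0 < i)%N /\ (m < i + t)%N by move: iL; rewrite /L; lia.
      have [pi [p1 p2 p3]] := IHapp i i0 im it.
      apply: le_trans (@qdiff _ _ mu mu' i j pi eps' hm hm' p1 p2 p3) _.
      by rewrite ler_wpM2r ?(ltW eps'0) // ler_nat leq_mul.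
    rewrite -mulr_suml /Kc mulrDl mul1r lerDl; exact: ltW.
  lra.
have [sig [s1 s2 s3]] := HM (Dl M L) (mu_up mu') (size_Dl M L) (enum_uniq _)
   (fun X _ => mu_up_le1 mu' X hm') Hq.
exists sig; split.
- by move=> X /eqP; rewrite -mem_Dl => /s1; rewrite mem_Dl => /eqP.
- by move=> X Y; rewrite !inE -!mem_Dl; apply: s2.
- by move=> X /eqP; rewrite -mem_Dl; apply: s3.
Qed.

Lemma mu_up0 {R : realType} {M : finType} (mu : {set M} -> R) :
  is_distr mu -> mu_up mu set0 = 1.
Proof. by case=> _ <-; rewrite /mu_up; apply: eq_bigl => Y; rewrite sub0set. Qed.

Theorem lemma6 (R : realType) (M : finType) (mu : {set M} -> R) :
  is_distr mu ->
  (forall eps : R, 0 < eps -> exists2 delta : R, 0 < delta &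
    forall mu' : {set M} -> R, is_distr mu' ->
      (forall l k : nat, (l <= #|M|)%N -> (1 <= k <= 'C(#|M|, l))%N ->
         `|PrF mu k l - PrF mu' k l| <= delta) ->
      forall l : nat, (l <= #|M|)%N ->
        exists pi : {set M} -> {set M},
          [/\ forall X : {set M}, #|X| = l -> #|pi X| = l,
              {in [pred X : {set M} | #|X| == l] &, injective pi} &
              forall X : {set M}, #|X| = l ->
                `|mu_up mu X - mu_up mu' (pi X)| <= eps])
  /\
  (forall mu' : {set M} -> R, is_distr mu' ->
      (forall l k : nat, (l <= #|M|)%N -> (1 <= k <= 'C(#|M|, l))%N ->
         PrF mu k l = PrF mu' k l) ->
      forall l : nat, (l <= #|M|)%N ->
        exists pi : {set M} -> {set M},
          [/\ forall X : {set M}, #|X| = l -> #|pi X| = l,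
              {in [pred X : {set M} | #|X| == l] &, injective pi} &
              forall X : {set M}, #|X| = l -> mu_up mu X = mu_up mu' (pi X)]).
Proof.
move=> hm.
have P1 : forall eps : R, 0 < eps -> exists2 delta : R, 0 < delta &
    forall mu' : {set M} -> R, is_distr mu' ->
      (forall l k : nat, (l <= #|M|)%N -> (1 <= k <= 'C(#|M|, l))%N ->
         `|PrF mu k l - PrF mu' k l| <= delta) ->
      forall l : nat, (l <= #|M|)%N ->
        exists pi : {set M} -> {set M},
          [/\ forall X : {set M}, #|X| = l -> #|pi X| = l,
              {in [pred X : {set M} | #|X| == l] &, injective pi} &
              forall X : {set M}, #|X| = l ->
                `|mu_up mu X - mu_up mu' (pi X)| <= eps].
  move=> eps he; have [d d0 Hd] := @levels R M mu hm #|M| eps he.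
  exists d => // mu' hm' Hc [|l] lm.
    exists id; split => // X /eqP; rewrite cards_eq0 => /eqP ->.
    by rewrite !mu_up0 // subrr normr0 ltW.
  have [pi [p1 p2 p3]] := Hd mu' hm' Hc l.+1 erefl lm ltac:(lia).
  by exists pi; split.
split => // mu' hm' Heq l lm.
pose g X Y := if mu_up mu X == mu_up mu' Y then 1 else `|mu_up mu X - mu_up mu' Y|.
have g0 X Y : 0 < g X Y.
  rewrite /g; case: eqP => // /eqP; rewrite -subr_eq0 => h; by rewrite normr_gt0.
have [e0 e00 He0] : exists2 e, 0 < e & forall X, X \in enum {set M} ->
    forall Y, Y \in enum {set M} -> e <= g X Y.
  apply: seq_min.
    move=> X d d' _ dd' H Y hY; apply: le_trans dd' (H Y hY).
  move=> X _; apply: seq_min.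
    by move=> Y d d' _ dd' H; apply: le_trans dd' H.
  by move=> Y _; exists (g X Y) => //.
have [d d0 Hd] := P1 (e0 / 2) ltac:(by rewrite divr_gt0).
have [pi [p1 p2 p3]] := Hd mu' hm' ltac:(by move=> l' k h1 h2; rewrite Heq // subrr normr0 ltW) l lm.
exists pi; split => // X hX; have := p3 X hX.
have := He0 X (mem_enum _ _) (pi X) (mem_enum _ _); rewrite /g.
case: eqP => // _ h1 h2; lra.
Qed.
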